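(* For every sample size $n$, every sample $\mathbf{x}_1,\dots,\mathbf{x}_n\in\mathbb{R}$ and every $N\ge 0$, the Hermite series distribution function estimator satisfies $\sup_{x\in\mathbb{R}}|\hat F_N(x)|\le C N^{17/12}$ for all $N\ge1$, where $C$ is a constant not depending on $N$, $n$, the sample, or $x$; i.e. $\max_x|\hat F_N(x)|=O(N^{17/12})$ as $N\to\infty$. (The same holds for the estimator built from the $\mathbf{y}_i$.)
   Context: Hermite functions: $h_k(x)=(2^k k!\sqrt{\pi})^{-1/2}e^{-x^2/2}H_k(x)$ with $H_k(x)=(-1)^k e^{x^2}\frac{d^k}{dx^k}e^{-x^2}$. Given observations $\mathbf{x}_1,\dots,\mathbf{x}_n$, let $\hat a_k=\frac1n\sum_{i=1}^n h_k(\mathbf{x}_i)$ and $\hat F_N(x)=\sum_{k=0}^N\hat a_k\int_{-\infty}^x h_k(t)\,dt$. *)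

(* Defs.v *)
From Stdlib Require Import Reals Arith Factorial.
From Coquelicot Require Import Coquelicot.
Open Scope R_scope.

Definition hermiteH (k : nat) (x : R) : R :=
  (-1) ^ k * exp (x ^ 2) * Derive_n (fun t => exp (- t ^ 2)) k x.

Definition hermite_fn (k : nat) (x : R) : R :=
  / sqrt (2 ^ k * INR (fact k) * sqrt PI) * exp (- x ^ 2 / 2) * hermiteH k x.

Definition hermite_int (k : nat) (x : R) : R :=
  RInt_gen (hermite_fn k) (Rbar_locally m_infty) (at_point x).

(* hat a_k = (1/n) sum_{i=1}^n h_k(x_i); observations indexed 0..n-1. *)
Definition a_hat (n : nat) (xs : nat -> R) (k : nat) : R :=
  / INR n * sum_f_R0 (fun i => hermite_fn k (xs i)) (pred n).

Definition F_hat (n : nat) (xs : nat -> R) (N : nat) (x : R) : R :=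
  sum_f_R0 (fun k => a_hat n xs k * hermite_int k x) N.

(* Main.v *)
Require Import Defs.
From Stdlib Require Import Reals Lra Lia Factorial ZArith.
From Coquelicot Require Import Coquelicot.
Open Scope R_scope.


Lemma D_mult (f g : R -> R) x df dg : is_derive f x df -> is_derive g x dg ->
  is_derive (fun t => f t * g t) x (df * g x + f x * dg).
Proof. intros H1 H2. apply (is_derive_mult f g x df dg H1 H2). intros; apply Rmult_comm. Qed.
Lemma D_plus (f g : R -> R) x df dg : is_derive f x df -> is_derive g x dg ->
  is_derive (fun t => f t + g t) x (df + dg).
Proof. intros H1 H2. apply (is_derive_plus f g x df dg H1 H2). Qed.
Lemma D_minus (f g : R -> R) x df dg : is_derive f x df -> is_derive g x dg ->
  is_derive (fun t => f t - g t) x (df - dg).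
Proof. intros H1 H2. apply (is_derive_minus f g x df dg H1 H2). Qed.
Lemma D_comp (f g : R -> R) x df dg : is_derive f (g x) df -> is_derive g x dg ->
  is_derive (fun t => f (g t)) x (dg * df).
Proof. intros H1 H2. apply (is_derive_comp f g x df dg H1 H2). Qed.
Lemma D_id x : is_derive (fun t : R => t) x 1.
Proof. apply (is_derive_id x). Qed.
Lemma D_const (a : R) x : is_derive (fun _ : R => a) x 0.
Proof. apply (is_derive_const a x). Qed.
Lemma D_ext (f g : R -> R) (x l l2 : R) : (forall t, f t = g t) -> l = l2 -> is_derive f x l -> is_derive g x l2.
Proof. intros H e D; subst; eapply is_derive_ext; eauto. Qed.

Fixpoint Hp (k : nat) (x : R) : R :=
  match k with
  | O => 1
  | S k' => match k' with
            | O => 2 * x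
            | S k'' => 2 * x * Hp k' x - 2 * INR k' * Hp k'' x
            end
  end.

Lemma Hp_SS k x : Hp (S (S k)) x = 2 * x * Hp (S k) x - 2 * INR (S k) * Hp k x.
Proof. reflexivity. Qed.

Lemma Hp_der : forall k x, is_derive (Hp (S k)) x (2 * INR (S k) * Hp k x).
Proof.
  assert (H : forall k, (forall x, is_derive (Hp (S k)) x (2 * INR (S k) * Hp k x)) /\
                        (forall x, is_derive (Hp (S (S k))) x (2 * INR (S (S k)) * Hp (S k) x))).
  { intro k0; induction k0 as [|k IH].
    - split; intro x.
      + simpl. eapply D_ext with (f := fun t => 2 * t).
        3: apply is_derive_scal; apply D_id.
        intro; reflexivity. ring.
      + eapply D_ext with (f := fun t => 2 * t * (2 * t) - 2 * 1 * 1).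
        3: apply D_minus; [apply D_mult; apply is_derive_scal; apply D_id | apply D_const].
        intro t; simpl; ring. simpl; ring.
    - destruct IH as [IH0 IH]. split; [exact IH|]. intro x.
      eapply D_ext with (f := fun t => 2 * t * Hp (S (S k)) t - 2 * INR (S (S k)) * Hp (S k) t).
      intro t; reflexivity.
      2:{ apply D_minus. apply D_mult. apply is_derive_scal; apply D_id. apply IH.
          apply is_derive_scal. apply IH0. }
      rewrite (Hp_SS k x). rewrite !S_INR. ring. }
  intros; apply H.
Qed.

Lemma D_gauss x : is_derive (fun t => exp (- t ^ 2)) x (- (2 * x) * exp (- x ^ 2)).
Proof. auto_derive. auto. change (- (1 * ((1 + 1) * (x * 1))) * exp (- (x * (x * 1))) = - (2 * x) * exp (- x ^ 2)). replace (x * (x * 1)) with (x ^ 2) by ring. ring. Qed.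

Definition gR (k : nat) (x : R) : R := (-1) ^ k * Hp k x * exp (- x ^ 2).

Lemma gR_der k x : is_derive (gR k) x (gR (S k) x).
Proof.
  unfold gR.
  destruct k as [|k].
  - eapply D_ext with (f := fun t => 1 * exp (- t ^ 2)).
    3: apply is_derive_scal; apply D_gauss.
    intro t; simpl; ring. simpl; ring.
  - eapply D_ext with (f := fun t => (-1) ^ S k * (Hp (S k) t * exp (- t ^ 2))).
    3: apply is_derive_scal; apply D_mult; [apply Hp_der | apply D_gauss].
    intro t; ring.
    destruct k as [|k].
    + simpl. ring.
    + rewrite (Hp_SS (S k) x). rewrite <- !tech_pow_Rmult. rewrite !S_INR. ring.
Qed.

Lemma Derive_n_gauss k : forall x, Derive_n (fun t => exp (- t ^ 2)) k x = gR k x.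
Proof.
  induction k as [|k IH]; intro x.
  - simpl. unfold gR; simpl; ring.
  - change (Derive (Derive_n (fun t => exp (- t ^ 2)) k) x = gR (S k) x). rewrite (Derive_ext _ (gR k) x IH). apply is_derive_unique. apply gR_der.
Qed.

Lemma hermiteH_Hp k x : hermiteH k x = Hp k x.
Proof.
  unfold hermiteH. rewrite Derive_n_gauss. unfold gR.
  replace ((-1) ^ k * exp (x ^ 2) * ((-1) ^ k * Hp k x * exp (- x ^ 2)))
    with (((-1) * (-1)) ^ k * Hp k x * (exp (x ^ 2) * exp (- x ^ 2))).
  2:{ rewrite Rpow_mult_distr. ring. }
  rewrite <- exp_plus. replace (x ^ 2 + - x ^ 2) with 0 by ring. rewrite exp_0.
  replace (-1 * -1) with 1 by ring. rewrite pow1. ring.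
Qed.

Definition ck (k : nat) : R := / sqrt (2 ^ k * INR (fact k) * sqrt PI).
Definition sk (k : nat) : R := sqrt (2 * INR k).
Notation h := hermite_fn.

Lemma h_eq k x : h k x = ck k * exp (- x ^ 2 / 2) * Hp k x.
Proof. unfold hermite_fn, ck. rewrite hermiteH_Hp. reflexivity. Qed.

Lemma X_pos k : 0 < 2 ^ k * INR (fact k) * sqrt PI.
Proof.
  apply Rmult_lt_0_compat. apply Rmult_lt_0_compat. apply pow_lt; lra.
  apply lt_0_INR, lt_O_fact. apply sqrt_lt_R0, PI_RGT_0.
Qed.

Lemma sk_pos k : 0 < sk (S k).
Proof. unfold sk. apply sqrt_lt_R0. rewrite S_INR. pose proof (pos_INR k). lra. Qed.

Lemma sk_sq k : sk k * sk k = 2 * INR k.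
Proof. unfold sk. apply sqrt_sqrt. pose proof (pos_INR k). lra. Qed.

Lemma sk_0 : sk 0 = 0.
Proof. unfold sk. simpl. rewrite Rmult_0_r. apply sqrt_0. Qed.

Lemma ck_S k : ck (S k) * sk (S k) = ck k.
Proof.
  unfold ck.
  replace (2 ^ S k * INR (fact (S k)) * sqrt PI) with ((2 * INR (S k)) * (2 ^ k * INR (fact k) * sqrt PI)).
  2:{ rewrite fact_simpl, mult_INR. simpl pow. ring. }
  rewrite sqrt_mult. 2:{ rewrite S_INR; pose proof (pos_INR k); lra. }
  2:{ left; apply X_pos. }
  fold (sk (S k)). pose proof (sk_pos k).
  assert (0 < sqrt (2 ^ k * INR (fact k) * sqrt PI)) by (apply sqrt_lt_R0, X_pos).
  field. split; lra.
Qed.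

Lemma h_rec k x : sk (S k) * h (S k) x = 2 * x * h k x - sk k * h (pred k) x.
Proof.
  rewrite !h_eq. rewrite <- (ck_S k).
  destruct k as [|j].
  - rewrite sk_0. simpl. ring.
  - simpl pred. rewrite Hp_SS.
    rewrite <- (ck_S j).
    replace (2 * INR (S j)) with (sk (S j) * sk (S j)) by apply sk_sq.
    rewrite <- (ck_S (S j)). ring.
Qed.

Lemma D_E x : is_derive (fun t => exp (- t ^ 2 / 2)) x (- x * exp (- x ^ 2 / 2)).
Proof. auto_derive. auto.
  change (- (1 * ((1 + 1) * (x * 1))) * / 2 * exp (- (x * (x * 1)) * / 2) = - x * exp (- x ^ 2 / 2)). replace (- (x * (x * 1)) * / 2) with (- x ^ 2 / 2) by (unfold Rdiv; ring). field.
Qed.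

Lemma h_der k x : is_derive (h k) x (x * h k x - sk (S k) * h (S k) x).
Proof.
  rewrite h_rec.
  destruct k as [|j].
  - eapply D_ext with (f := fun t => ck 0 * (exp (- t ^ 2 / 2) * 1)).
    3: apply is_derive_scal; apply D_mult; [apply D_E | apply D_const].
    intro t; rewrite h_eq; simpl; ring.
    rewrite !h_eq, sk_0. simpl. ring.
  - eapply D_ext with (f := fun t => ck (S j) * (exp (- t ^ 2 / 2) * Hp (S j) t)).
    3: apply is_derive_scal; apply D_mult; [apply D_E | apply Hp_der].
    intro t; rewrite h_eq; ring.
    simpl pred. rewrite !h_eq. rewrite <- (ck_S j).
    replace (2 * INR (S j)) with (sk (S j) * sk (S j)) by apply sk_sq.
    ring.
Qed.

Lemma term_le_sum (An : nat -> R) n : (forall i, 0 <= An i) -> An n <= sum_f_R0 An n.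
Proof.
  intro Hp. destruct n. simpl; lra.
  simpl. pose proof (cond_pos_sum An n Hp). lra.
Qed.

Lemma poly_gauss m t : (1 + t ^ 2) ^ m * exp (- t ^ 2 / 2) <= 2 ^ m * INR (fact m) * exp (1 / 2).
Proof.
  set (u := (1 + t ^ 2) / 2).
  assert (Hu : 0 <= u) by (unfold u; pose proof (pow2_ge_0 t); lra).
  pose proof (exp_ge_taylor u m Hu) as H1.
  pose proof (term_le_sum (fun k => u ^ k / INR (fact k)) m) as H2.
  assert (H3 : u ^ m / INR (fact m) <= exp u).
  { eapply Rle_trans; [apply H2|exact H1]. intro i. apply Rmult_le_pos. apply pow_le; auto.
    left; apply Rinv_0_lt_compat, lt_0_INR, lt_O_fact. }
  assert (Hf : 0 < INR (fact m)) by apply lt_0_INR, lt_O_fact.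
  assert (H4 : u ^ m <= INR (fact m) * exp u).
  { apply (Rmult_le_reg_r (/ INR (fact m))). apply Rinv_0_lt_compat; auto.
    replace (INR (fact m) * exp u * / INR (fact m)) with (exp u) by (field; lra). exact H3. }
  replace ((1 + t ^ 2) ^ m) with (2 ^ m * u ^ m) by (unfold u; rewrite <- Rpow_mult_distr; f_equal; field).
  replace (exp u) with (exp (1/2) * exp (t ^ 2 / 2)) in H4.
  2:{ rewrite <- exp_plus. f_equal. unfold u. field. }
  assert (He : exp (t ^ 2 / 2) * exp (- t ^ 2 / 2) = 1).
  { rewrite <- exp_plus. replace (t ^ 2 / 2 + - t ^ 2 / 2) with 0 by field. apply exp_0. }
  pose proof (exp_pos (- t ^ 2 / 2)).
  pose proof (pow_lt 2 m ltac:(lra)).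
  apply Rle_trans with (2 ^ m * (INR (fact m) * (exp (1 / 2) * exp (t ^ 2 / 2))) * exp (- t ^ 2 / 2)).
  apply Rmult_le_compat_r. lra. apply Rmult_le_compat_l; lra.
  replace (2 ^ m * (INR (fact m) * (exp (1 / 2) * exp (t ^ 2 / 2))) * exp (- t ^ 2 / 2))
    with (2 ^ m * INR (fact m) * exp (1 / 2) * (exp (t ^ 2 / 2) * exp (- t ^ 2 / 2))) by ring.
  rewrite He. lra.
Qed.

Lemma ck_pos k : 0 < ck k.
Proof. unfold ck. apply Rinv_0_lt_compat, sqrt_lt_R0, X_pos. Qed.

Lemma one_t2 t : 1 <= 1 + t ^ 2.
Proof. pose proof (pow2_ge_0 t). lra. Qed.

Lemma abs_le_1t2 t : Rabs t <= 1 + t ^ 2.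
Proof.
  destruct (Rle_dec (Rabs t) 1). pose proof (one_t2 t); lra.
  replace (t ^ 2) with (Rabs t * Rabs t). nra.
  rewrite <- Rabs_mult. rewrite Rabs_right. ring. nra.
Qed.

Lemma h_decay_all : forall k m, exists C, forall t, Rabs (h k t) * (1 + t ^ 2) ^ m <= C.
Proof.
  assert (H : forall k, (forall m, exists C, forall t, Rabs (h k t) * (1 + t ^ 2) ^ m <= C) /\
                        (forall m, exists C, forall t, Rabs (h (S k) t) * (1 + t ^ 2) ^ m <= C)).
  2:{ intro k; apply H. }
  assert (H0 : forall m, exists C, forall t, Rabs (h 0 t) * (1 + t ^ 2) ^ m <= C).
  { intro m. exists (ck 0 * (2 ^ m * INR (fact m) * exp (1 / 2))). intro t.
    rewrite h_eq. simpl Hp. rewrite Rmult_1_r.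
    rewrite Rabs_mult, (Rabs_right (ck 0)), Rabs_right.
    2: left; apply exp_pos. 2: left; apply ck_pos.
    rewrite Rmult_assoc. apply Rmult_le_compat_l. left; apply ck_pos.
    rewrite Rmult_comm. apply poly_gauss. }
  assert (Hstep : forall k, (forall m, exists C, forall t, Rabs (h (pred k) t) * (1 + t ^ 2) ^ m <= C) ->
                  (forall m, exists C, forall t, Rabs (h k t) * (1 + t ^ 2) ^ m <= C) ->
                  (forall m, exists C, forall t, Rabs (h (S k) t) * (1 + t ^ 2) ^ m <= C)).
  { intros k Hp Hk m. destruct (Hp m) as [C1 HC1]. destruct (Hk (S m)) as [C2 HC2].
    pose proof (sk_pos k) as Hs.
    assert (Hs0 : 0 <= sk k) by (unfold sk; apply sqrt_pos).
    exists ((2 * C2 + sk k * C1) / sk (S k)). intro t.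
    assert (E : h (S k) t = (2 * t * h k t - sk k * h (pred k) t) / sk (S k)).
    { rewrite <- h_rec. field. lra. }
    rewrite E. unfold Rdiv. rewrite Rabs_mult, (Rabs_right (/ sk (S k))).
    2:{ left; apply Rinv_0_lt_compat; lra. }
    pose proof (Rinv_0_lt_compat _ Hs).
    pose proof (pow_le (1 + t^2) m ltac:(pose proof (one_t2 t); lra)) as Hpw.
    replace (Rabs (2 * t * h k t - sk k * h (pred k) t) * / sk (S k) * (1 + t ^ 2) ^ m)
      with ((Rabs (2 * t * h k t - sk k * h (pred k) t) * (1 + t ^ 2) ^ m) * / sk (S k)) by ring.
    apply Rmult_le_compat_r. lra.
    eapply Rle_trans. apply Rmult_le_compat_r. exact Hpw. apply Rabs_triang.
    rewrite Rabs_Ropp, !Rabs_mult, (Rabs_right 2), (Rabs_right (sk k)) by lra.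
    specialize (HC1 t). specialize (HC2 t). replace ((1+t^2)^(S m)) with ((1+t^2)*(1+t^2)^m) in HC2 by reflexivity.
    pose proof (abs_le_1t2 t). pose proof (Rabs_pos t). pose proof (Rabs_pos (h k t)).
    pose proof (Rabs_pos (h (pred k) t)).
    assert (Rabs t * Rabs (h k t) * (1 + t^2)^m <= C2).
    { eapply Rle_trans; [|exact HC2].
      replace (Rabs (h k t) * ((1 + t ^ 2) * (1 + t ^ 2) ^ m)) with
        ((1 + t^2) * Rabs (h k t) * (1 + t ^ 2) ^ m) by ring.
      apply Rmult_le_compat_r; auto. apply Rmult_le_compat_r; auto. }
    nra. }
  intro k; induction k as [|k IH].
  - split. exact H0. apply Hstep. exact H0. exact H0.
  - destruct IH as [IH1 IH2]. split. exact IH2. apply Hstep. exact IH1. exact IH2.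
Qed.


Definition Dble (f : R -> R) := forall x, ex_derive f x.

Lemma Dble_h k : Dble (h k).
Proof. intro x. eexists. apply h_der. Qed.
Lemma Dble_plus f g : Dble f -> Dble g -> Dble (fun t => f t + g t).
Proof. intros F G x. apply (ex_derive_plus f g x (F x) (G x)). Qed.
Lemma Dble_mult f g : Dble f -> Dble g -> Dble (fun t => f t * g t).
Proof. intros F G x. apply (ex_derive_mult f g x (F x) (G x)). Qed.
Lemma Dble_scal c f : Dble f -> Dble (fun t => c * f t).
Proof. intros F x. apply (ex_derive_scal f c x (F x)). Qed.
Lemma Dble_id : Dble (fun t => t).
Proof. intro x. apply ex_derive_id. Qed.
Lemma Dble_const c : Dble (fun _ => c).
Proof. intro x. apply (ex_derive_const c x). Qed.
Lemma Dble_ext f g : (forall t, f t = g t) -> Dble f -> Dble g.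
Proof. intros E F x. destruct (F x) as [l Hl]. exists l. eapply is_derive_ext; eauto. Qed.
Lemma Dble_minus f g : Dble f -> Dble g -> Dble (fun t => f t - g t).
Proof. intros F G. apply Dble_ext with (fun t => f t + (-1) * g t). intro; ring.
  apply Dble_plus; auto. apply Dble_scal; auto. Qed.
Lemma Dble_sum (F : nat -> R -> R) M : (forall j, Dble (F j)) -> Dble (fun t => sum_f_R0 (fun j => F j t) M).
Proof. intro HF. induction M. simpl. apply HF. simpl. apply Dble_plus; auto. Qed.

Lemma Dble_cont f x : Dble f -> continuous f x.
Proof. intro F. apply (ex_derive_continuous (K:=R_AbsRing) (V:=R_NormedModule) f x (F x)). Qed.
Lemma Dble_RInt f a b : Dble f -> ex_RInt f a b.
Proof. intro F. apply (ex_RInt_continuous (V:=R_CompleteNormedModule)). intros; apply Dble_cont; auto. Qed.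

Definition dec (g : R -> R) := exists C, forall t, Rabs (g t) * (1 + t ^ 2) <= C.
Definition bnd (g : R -> R) := exists B, forall t, Rabs (g t) <= B.

Lemma dec_h k : dec (h k).
Proof. destruct (h_decay_all k 1) as [C HC]. exists C. intro t. rewrite <- (pow_1 (1 + t^2)). apply HC. Qed.
Lemma bnd_h k : bnd (h k).
Proof. destruct (h_decay_all k 0) as [C HC]. exists C. intro t. specialize (HC t). simpl in HC. lra. Qed.
Lemma dec_th k : dec (fun t => t * h k t).
Proof. destruct (h_decay_all k 2) as [C HC]. exists C. intro t. specialize (HC t).
  eapply Rle_trans; [|exact HC]. rewrite Rabs_mult.
  pose proof (abs_le_1t2 t). pose proof (Rabs_pos t). pose proof (Rabs_pos (h k t)). pose proof (one_t2 t).
  replace ((1 + t^2)^2) with ((1+t^2)*(1+t^2)) by ring.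
  replace (Rabs (h k t) * ((1 + t ^ 2) * (1 + t ^ 2))) with ((1 + t^2) * Rabs (h k t) * (1 + t^2)) by ring.
  apply Rmult_le_compat_r. lra. apply Rmult_le_compat_r; lra.
Qed.
Lemma dec_bnd g : dec g -> bnd g.
Proof. intros [C HC]. exists C. intro t. specialize (HC t). pose proof (one_t2 t). pose proof (Rabs_pos (g t)). nra. Qed.
Lemma dec_mult f g : dec f -> bnd g -> dec (fun t => f t * g t).
Proof. intros [C HC] [B HB]. exists (C * B). intro t. specialize (HC t). specialize (HB t).
  rewrite Rabs_mult. pose proof (Rabs_pos (f t)). pose proof (Rabs_pos (g t)). pose proof (one_t2 t).
  assert (0 <= C) by (pose proof (Rmult_le_pos _ _ H (Rle_trans 0 1 _ Rle_0_1 H1)); lra).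
  replace (Rabs (f t) * Rabs (g t) * (1 + t ^ 2)) with ((Rabs (f t) * (1 + t^2)) * Rabs (g t)) by ring.
  apply Rmult_le_compat; auto. apply Rmult_le_pos; lra. Qed.
Lemma dec_plus f g : dec f -> dec g -> dec (fun t => f t + g t).
Proof. intros [C HC] [D HD]. exists (C + D). intro t. specialize (HC t). specialize (HD t).
  pose proof (Rabs_triang (f t) (g t)). pose proof (one_t2 t). nra. Qed.
Lemma dec_scal c f : dec f -> dec (fun t => c * f t).
Proof. intros [C HC]. exists (Rabs c * C). intro t. specialize (HC t). rewrite Rabs_mult.
  pose proof (Rabs_pos c). rewrite Rmult_assoc. apply Rmult_le_compat_l; auto. Qed.
Lemma dec_ext f g : (forall t, f t = g t) -> dec f -> dec g.
Proof. intros E [C HC]. exists C. intro t. rewrite <- E. auto. Qed.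
Lemma dec_sum (F : nat -> R -> R) M : (forall j, dec (F j)) -> dec (fun t => sum_f_R0 (fun j => F j t) M).
Proof. intro HF. induction M. simpl. apply HF. simpl. apply dec_plus; auto. Qed.
Lemma bnd_plus f g : bnd f -> bnd g -> bnd (fun t => f t + g t).
Proof. intros [C HC] [D HD]. exists (C + D). intro t. specialize (HC t). specialize (HD t).
  pose proof (Rabs_triang (f t) (g t)). lra. Qed.
Lemma bnd_scal c f : bnd f -> bnd (fun t => c * f t).
Proof. intros [C HC]. exists (Rabs c * C). intro t. rewrite Rabs_mult. apply Rmult_le_compat_l; auto. apply Rabs_pos. Qed.
Lemma bnd_sum (F : nat -> R -> R) M : (forall j, bnd (F j)) -> bnd (fun t => sum_f_R0 (fun j => F j t) M).
Proof. intro HF. induction M. simpl. apply HF. simpl. apply bnd_plus; auto. Qed.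

Lemma lim_inv1 : is_lim_seq (fun m => / (1 + INR m)) 0.
Proof.
  assert (H : is_lim_seq (fun m => 1 + INR m) p_infty).
  { eapply is_lim_seq_plus. apply is_lim_seq_const. apply is_lim_seq_INR. simpl. constructor. }
  pose proof (is_lim_seq_inv _ _ H) as H2. simpl in H2. apply H2. discriminate.
Qed.

Lemma dec_lim_gen g (s : nat -> R) : dec g -> (forall m, INR m <= s m ^ 2) -> is_lim_seq (fun m => g (s m)) 0.
Proof.
  intros [C HC] Hs. apply is_lim_seq_abs_0.
  apply is_lim_seq_le_le with (u := fun _ => 0) (w := fun m => C * / (1 + INR m)).
  - intro m. split. apply Rabs_pos. specialize (HC (s m)). specialize (Hs m).
    pose proof (pos_INR m).
    assert (0 < 1 + INR m) by lra.
    apply Rmult_le_reg_r with (1 + INR m). lra.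
    rewrite Rmult_assoc, Rinv_l by lra. rewrite Rmult_1_r.
    eapply Rle_trans; [|exact HC]. apply Rmult_le_compat_l. apply Rabs_pos. lra.
  - apply is_lim_seq_const.
  - replace (Finite 0) with (Rbar_mult C 0) by (simpl; f_equal; ring). apply is_lim_seq_scal_l. apply lim_inv1.
Qed.

Lemma INR_le_sq m : INR m <= INR m ^ 2.
Proof. destruct m. simpl; lra. rewrite S_INR. pose proof (pos_INR m). nra. Qed.

Lemma dec_limp g : dec g -> is_lim_seq (fun m => g (INR m)) 0.
Proof. intro D. apply dec_lim_gen; auto. apply INR_le_sq. Qed.
Lemma dec_limm g : dec g -> is_lim_seq (fun m => g (- INR m)) 0.
Proof. intro D. apply dec_lim_gen; auto. intro m. replace ((- INR m)^2) with (INR m ^ 2) by ring. apply INR_le_sq. Qed.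

Lemma le_lim (x y : R) (e : nat -> R) m0 : (forall m, (m0 <= m)%nat -> x <= y + e m) -> is_lim_seq e 0 -> x <= y.
Proof.
  intros H He.
  assert (H2 : is_lim_seq (fun m => y + e m) (y + 0)) by (apply is_lim_seq_plus'; auto; apply is_lim_seq_const).
  pose proof (is_lim_seq_le_loc (fun _ => x) (fun m => y + e m) x (y + 0)) as H3.
  rewrite Rplus_0_r in H2, H3. simpl in H3. apply H3.
  exists m0. auto. apply is_lim_seq_const. auto.
Qed.

Lemma RInt_mono_int g a b a' b' : a' <= a -> a <= b -> b <= b' -> Dble g -> (forall x, 0 <= g x) ->
  RInt g a b <= RInt g a' b'.
Proof.
  intros H1 H2 H3 D P.
  rewrite <- (RInt_Chasles g a' a b') by (apply Dble_RInt; auto).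
  rewrite <- (RInt_Chasles g a b b') by (apply Dble_RInt; auto).
  assert (0 <= RInt g a' a) by (apply RInt_ge_0; auto; apply Dble_RInt; auto).
  assert (0 <= RInt g b b') by (apply RInt_ge_0; auto; apply Dble_RInt; auto).
  change (RInt g a b <= RInt g a' a + (RInt g a b + RInt g b b')). lra.
Qed.


Lemma nat_unbounded r : exists n : nat, r <= INR n.
Proof.
  destruct (archimed r) as [H1 _].
  destruct (Z_le_gt_dec 0 (up r)) as [Hz|Hz].
  - exists (Z.to_nat (up r)). rewrite INR_IZR_INZ. rewrite Z2Nat.id by lia. lra.
  - exists 0%nat. simpl. assert (up r < 0)%Z as Hz2 by lia. apply IZR_lt in Hz2. lra.
Qed.

Lemma RI_plus f g a b : Dble f -> Dble g -> RInt (fun t => f t + g t) a b = RInt f a b + RInt g a b.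
Proof. intros F G. apply (RInt_plus (V:=R_CompleteNormedModule)); apply Dble_RInt; auto. Qed.
Lemma RI_scal c f a b : Dble f -> RInt (fun t => c * f t) a b = c * RInt f a b.
Proof. intros F. apply (RInt_scal (V:=R_CompleteNormedModule)); apply Dble_RInt; auto. Qed.
Lemma RI_minus f g a b : Dble f -> Dble g -> RInt (fun t => f t - g t) a b = RInt f a b - RInt g a b.
Proof. intros F G. apply (RInt_minus (V:=R_CompleteNormedModule)); apply Dble_RInt; auto. Qed.
Lemma RI_ext (f g : R -> R) a b : (forall t, f t = g t) -> @RInt R_CompleteNormedModule f a b = RInt g a b.
Proof. intro E. apply RInt_ext. intros; auto. Qed.

Lemma RInt_der (F f : R -> R) a b : (forall x, is_derive F x (f x)) -> Dble f -> RInt f a b = F b - F a.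
Proof.
  intros HF Df. apply is_RInt_unique.
  apply (is_RInt_derive (V:=R_CompleteNormedModule) F f a b). intros; apply HF.
  intros; apply Dble_cont; auto.
Qed.

Lemma h_der2 k x : is_derive (h (S k)) x (sk (S k) * h k x - x * h (S k) x).
Proof.
  eapply D_ext. 3: apply h_der. intro; reflexivity.
  pose proof (h_rec (S k) x) as E. simpl pred in E. rewrite E. ring.
Qed.

Definition GG p q a b : R := RInt (fun t => h p t * h q t) a b.

Lemma GG_diag_step k a b : GG k k a b - GG (S k) (S k) a b = (h k b * h (S k) b - h k a * h (S k) a) / sk (S k).
Proof.
  pose proof (sk_pos k).
  assert (E : RInt (fun t => sk (S k) * (h k t * h k t - h (S k) t * h (S k) t)) a b
              = h k b * h (S k) b - h k a * h (S k) a).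
  { apply (RInt_der (fun t => h k t * h (S k) t)).
    - intro x. eapply D_ext. 3: apply D_mult; [apply h_der | apply h_der2].
      intro; reflexivity. ring.
    - apply Dble_scal, Dble_minus; apply Dble_mult; apply Dble_h. }
  assert (D1 : Dble (fun t => h k t * h k t)) by (apply Dble_mult; apply Dble_h).
  assert (D2 : Dble (fun t => h (S k) t * h (S k) t)) by (apply Dble_mult; apply Dble_h).
  assert (D3 : Dble (fun t => h k t * h k t - h (S k) t * h (S k) t)) by (apply Dble_minus; auto).
  rewrite (RI_scal _ _ _ _ D3), (RI_minus _ _ _ _ D1 D2) in E. unfold GG. rewrite <- E. field. lra.
Qed.

Lemma GG_off p q a b : (p <> q)%nat ->
  GG p q a b = ((sk (S p) * h (S p) b * h q b - sk (S q) * h p b * h (S q) b)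
               - (sk (S p) * h (S p) a * h q a - sk (S q) * h p a * h (S q) a)) / (2 * (INR p - INR q)).
Proof.
  intro Hpq.
  assert (Hne : INR p - INR q <> 0).
  { intro H. apply Hpq. apply INR_eq. lra. }
  assert (E : RInt (fun t => (2 * (INR p - INR q)) * (h p t * h q t)) a b
      = (sk (S p) * h (S p) b * h q b - sk (S q) * h p b * h (S q) b)
               - (sk (S p) * h (S p) a * h q a - sk (S q) * h p a * h (S q) a)).
  { apply (RInt_der (fun t => sk (S p) * h (S p) t * h q t - sk (S q) * h p t * h (S q) t)).
    - intro x. eapply D_ext.
      3: apply D_minus; (apply D_mult; [apply is_derive_scal | ]).
      3: apply h_der2. 3: apply h_der. 3: apply h_der. 3: apply h_der2.
      intro; reflexivity.
      pose proof (sk_sq (S p)). pose proof (sk_sq (S q)). rewrite !S_INR in *.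
      replace (2 * (INR p - INR q)) with ((2 * (INR p + 1)) - (2 * (INR q + 1))) by ring.
      rewrite <- H, <- H0. ring.
    - apply Dble_scal, Dble_mult; apply Dble_h. }
  rewrite RI_scal in E by (apply Dble_mult; apply Dble_h).
  fold (GG p q a b) in E.
  set (X := GG p q a b) in *. rewrite <- E. field. auto.
Qed.

Lemma bdry_lim W c : dec W -> is_lim_seq (fun m => (W (INR m) - W (- INR m)) * c) 0.
Proof.
  intro D. replace 0 with ((0 - 0) * c) by ring.
  apply is_lim_seq_mult'. apply is_lim_seq_minus'. apply dec_limp; auto. apply dec_limm; auto.
  apply is_lim_seq_const.
Qed.

Lemma GG_diag_lim k : is_lim_seq (fun m => GG k k (- INR m) (INR m) - GG 0 0 (- INR m) (INR m)) 0.
Proof.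
  induction k as [|k IH].
  - eapply is_lim_seq_ext; [|apply is_lim_seq_const]. intro m. simpl. ring.
  - set (W := fun t => h k t * h (S k) t).
    assert (DW : dec W) by (apply dec_mult; [apply dec_h | apply bnd_h]).
    pose proof (bdry_lim W (/ sk (S k)) DW) as HB.
    pose proof (is_lim_seq_minus' _ _ _ _ IH HB) as H. rewrite Rminus_0_r in H.
    eapply is_lim_seq_ext; [|exact H]. intro m. simpl.
    pose proof (GG_diag_step k (- INR m) (INR m)) as E. unfold W. unfold Rdiv in E.
    lra.
Qed.

Lemma GG_off_lim p q : (p <> q)%nat -> is_lim_seq (fun m => GG p q (- INR m) (INR m)) 0.
Proof.
  intro Hpq.
  set (W := fun t => sk (S p) * h (S p) t * h q t - sk (S q) * h p t * h (S q) t).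
  assert (DW : dec W).
  { unfold W. apply dec_ext with (fun t => (sk (S p) * h (S p) t) * h q t + (- sk (S q) * h p t) * h (S q) t).
    intro; ring.
    apply dec_plus; apply dec_mult; try apply bnd_h; apply dec_scal; apply dec_h. }
  pose proof (bdry_lim W (/ (2 * (INR p - INR q))) DW) as HB.
  eapply is_lim_seq_ext; [|exact HB]. intro m. simpl. rewrite (GG_off p q) by auto. unfold W. unfold Rdiv. ring.
Qed.

Definition FS (c : nat -> R) (sg : nat -> nat) (M : nat) (t : R) : R :=
  sum_f_R0 (fun j => c j * h (sg j) t) M.

Lemma Dble_FS c sg M : Dble (FS c sg M).
Proof. unfold FS. apply (Dble_sum (fun j t => c j * h (sg j) t)). intro j. apply Dble_scal, Dble_h. Qed.
Lemma dec_FS c sg M : dec (FS c sg M).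
Proof. unfold FS. apply (dec_sum (fun j t => c j * h (sg j) t)). intro j. apply dec_scal, dec_h. Qed.
Lemma bnd_FS c sg M : bnd (FS c sg M).
Proof. apply dec_bnd, dec_FS. Qed.

Lemma FS_S c sg M t : FS c sg (S M) t = FS c sg M t + c (S M) * h (sg (S M)) t.
Proof. reflexivity. Qed.

Lemma XL c sg q M : (forall j, (j <= M)%nat -> sg j <> q) ->
  is_lim_seq (fun m => RInt (fun t => FS c sg M t * h q t) (- INR m) (INR m)) 0.
Proof.
  induction M as [|M IH]; intro Hj.
  - eapply is_lim_seq_ext with (u := fun m => c 0%nat * GG (sg 0%nat) q (- INR m) (INR m)).
    + intro m. unfold GG. rewrite <- RI_scal by (apply Dble_mult; apply Dble_h).
      apply RI_ext. intro t. unfold FS. simpl. ring.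
    + replace (Finite 0) with (Rbar_mult (c 0%nat) 0) by (simpl; f_equal; ring).
      apply is_lim_seq_scal_l. apply GG_off_lim. apply Hj. lia.
  - assert (H1 : is_lim_seq (fun m => RInt (fun t => FS c sg M t * h q t) (- INR m) (INR m)) 0)
      by (apply IH; intros; apply Hj; lia).
    assert (H2 : is_lim_seq (fun m => c (S M) * GG (sg (S M)) q (- INR m) (INR m)) 0).
    { replace (Finite 0) with (Rbar_mult (c (S M)) 0) by (simpl; f_equal; ring).
      apply is_lim_seq_scal_l. apply GG_off_lim. apply Hj. lia. }
    pose proof (is_lim_seq_plus' _ _ _ _ H1 H2) as H. rewrite Rplus_0_r in H.
    eapply is_lim_seq_ext; [|exact H]. intro m.
    unfold GG. rewrite <- RI_scal by (apply Dble_mult; apply Dble_h).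
    rewrite <- RI_plus.
    2: apply Dble_mult; [apply Dble_FS | apply Dble_h].
    2: apply Dble_scal; apply Dble_mult; apply Dble_h.
    apply RI_ext. intro t. rewrite FS_S. ring.
Qed.

Lemma PL c sg M : (forall j k, (j <= M)%nat -> (k <= M)%nat -> sg j = sg k -> j = k) ->
  is_lim_seq (fun m => RInt (fun t => FS c sg M t * FS c sg M t) (- INR m) (INR m)
                       - GG 0 0 (- INR m) (INR m) * sum_f_R0 (fun j => c j * c j) M) 0.
Proof.
  induction M as [|M IH]; intro Hinj.
  - pose proof (GG_diag_lim (sg 0%nat)) as H.
    apply (is_lim_seq_scal_l _ (c 0%nat * c 0%nat)) in H.
    simpl Rbar_mult in H. rewrite Rmult_0_r in H.
    eapply is_lim_seq_ext; [|exact H]. intro m. simpl sum_f_R0.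
    rewrite (RI_ext (fun t => FS c sg 0 t * FS c sg 0 t) (fun t => c 0%nat * c 0%nat * (h (sg 0%nat) t * h (sg 0%nat) t))).
    2:{ intro t. unfold FS. simpl. ring. }
    rewrite RI_scal by (apply Dble_mult; apply Dble_h).
    unfold GG. ring.
  - set (q := sg (S M)).
    assert (H1 := IH ltac:(intros; apply Hinj; auto; lia)).
    assert (H2 : is_lim_seq (fun m => RInt (fun t => FS c sg M t * h q t) (- INR m) (INR m)) 0).
    { apply XL. intros j Hj E. assert (j = S M) by (apply Hinj; auto; lia). lia. }
    apply (is_lim_seq_scal_l _ (2 * c (S M))) in H2. simpl Rbar_mult in H2. rewrite Rmult_0_r in H2.
    pose proof (GG_diag_lim q) as H3.
    apply (is_lim_seq_scal_l _ (c (S M) * c (S M))) in H3. simpl Rbar_mult in H3. rewrite Rmult_0_r in H3.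
    pose proof (is_lim_seq_plus' _ _ _ _ H1 (is_lim_seq_plus' _ _ _ _ H2 H3)) as H.
    rewrite !Rplus_0_r in H.
    eapply is_lim_seq_ext; [|exact H]. intro m. simpl.
    set (a := - INR m). set (b := INR m).
    assert (E : @eq R (RInt (fun t => FS c sg (S M) t * FS c sg (S M) t) a b)
                (RInt (fun t => FS c sg M t * FS c sg M t) a b
                + (2 * c (S M) * RInt (fun t => FS c sg M t * h q t) a b
                + c (S M) * c (S M) * GG q q a b))).
    { assert (D1 : Dble (fun t => FS c sg M t * FS c sg M t)) by (apply Dble_mult; apply Dble_FS).
      assert (D2 : Dble (fun t => FS c sg M t * h q t)) by (apply Dble_mult; [apply Dble_FS | apply Dble_h]).
      assert (D3 : Dble (fun t => h q t * h q t)) by (apply Dble_mult; apply Dble_h).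
      rewrite (RI_ext (fun t => FS c sg (S M) t * FS c sg (S M) t)
        (fun t => FS c sg M t * FS c sg M t + ((2 * c (S M)) * (FS c sg M t * h q t) + (c (S M) * c (S M)) * (h q t * h q t)))).
      2:{ intro t. rewrite FS_S. fold q. ring. }
      rewrite (RI_plus _ _ _ _ D1).
      2:{ apply Dble_plus; apply Dble_scal; auto. }
      rewrite (RI_plus _ _ _ _ (Dble_scal _ _ D2) (Dble_scal _ _ D3)).
      rewrite (RI_scal _ _ _ _ D2), (RI_scal _ _ _ _ D3). unfold GG. ring. }
    rewrite E. ring.
Qed.

Lemma Dble_inv1 : Dble (fun t => / (1 + t ^ 2)).
Proof. intro x. auto_derive. pose proof (pow2_ge_0 x). change (1 + x * (x * 1) <> 0).
  replace (x * (x * 1)) with (x ^ 2) by ring. lra. Qed.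

Lemma atan_int a b : a <= b -> RInt (fun t => / (1 + t ^ 2)) a b <= PI.
Proof.
  intro Hab. rewrite (RInt_der atan).
  - pose proof (atan_bound a). pose proof (atan_bound b). lra.
  - intro x. eapply D_ext. 3: apply is_derive_atan. intro; reflexivity. unfold Rsqr. f_equal. ring.
  - apply Dble_inv1.
Qed.

Lemma c0_exists : exists c0, 0 <= c0 /\ forall a b, a <= b -> GG 0 0 a b <= c0.
Proof.
  destruct (dec_h 0) as [C HC]. destruct (bnd_h 0) as [B HB].
  assert (HB0 : 0 <= B) by (pose proof (HB 0); pose proof (Rabs_pos (h 0 0)); lra).
  assert (HC0 : 0 <= C) by (pose proof (HC 0); pose proof (Rabs_pos (h 0 0)); pose proof (one_t2 0); nra).
  exists (B * C * PI). split. pose proof PI_RGT_0. apply Rmult_le_pos; [apply Rmult_le_pos|]; lra.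
  intros a b Hab. unfold GG.
  apply Rle_trans with (RInt (fun t => (B * C) * / (1 + t ^ 2)) a b).
  - apply RInt_le; auto. apply Dble_RInt, Dble_mult; apply Dble_h.
    apply Dble_RInt, Dble_scal, Dble_inv1.
    intros x _. specialize (HC x). specialize (HB x).
    pose proof (one_t2 x). pose proof (Rabs_pos (h 0 x)).
    assert (Hh : h 0 x * h 0 x <= Rabs (h 0 x) * Rabs (h 0 x)).
    { rewrite <- Rabs_mult. apply RRle_abs. }
    assert (Rabs (h 0 x) <= C * / (1 + x ^ 2)).
    { apply Rmult_le_reg_r with (1 + x^2). lra. rewrite Rmult_assoc, Rinv_l by lra. lra. }
    assert (0 < / (1 + x^2)) by (apply Rinv_0_lt_compat; lra).
    nra.
  - rewrite RI_scal by apply Dble_inv1. pose proof (atan_int a b Hab).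
    apply Rmult_le_compat_l. apply Rmult_le_pos; auto. auto.
Qed.

Lemma sumsq_pos (c : nat -> R) M : 0 <= sum_f_R0 (fun j => c j * c j) M.
Proof. apply cond_pos_sum. intro; apply Rle_0_sqr. Qed.

Lemma PB c0 c sg M a b : 0 <= c0 -> (forall a b, a <= b -> GG 0 0 a b <= c0) ->
  (forall j k, (j <= M)%nat -> (k <= M)%nat -> sg j = sg k -> j = k) -> a <= b ->
  RInt (fun t => FS c sg M t * FS c sg M t) a b <= c0 * sum_f_R0 (fun j => c j * c j) M.
Proof.
  intros Hc0 HG Hinj Hab.
  destruct (nat_unbounded (Rabs a + Rabs b)) as [m0 Hm0].
  eapply (le_lim _ _ _ m0); [| exact (PL c sg M Hinj)].
  intros m Hm. apply le_INR in Hm.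
  pose proof (Rabs_pos a). pose proof (Rabs_pos b). pose proof (RRle_abs a). pose proof (RRle_abs b).
  pose proof (Rabs_Ropp a). pose proof (RRle_abs (-a)). pose proof (Rabs_Ropp b). pose proof (RRle_abs (-b)).
  eapply Rle_trans. apply (RInt_mono_int _ a b (- INR m) (INR m)); try lra.
  apply Dble_mult; apply Dble_FS. intro; apply Rle_0_sqr.
  pose proof (HG (- INR m) (INR m) ltac:(lra)).
  pose proof (sumsq_pos c M).
  assert (GG 0 0 (- INR m) (INR m) * sum_f_R0 (fun j => c j * c j) M <= c0 * sum_f_R0 (fun j => c j * c j) M)
    by (apply Rmult_le_compat_r; auto).
  lra.
Qed.


Definition FD (c : nat -> R) (sg : nat -> nat) (M : nat) (t : R) : R :=
  sum_f_R0 (fun j => c j * (t * h (sg j) t - sk (S (sg j)) * h (S (sg j)) t)) M.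
Definition cU (c : nat -> R) (sg : nat -> nat) (j : nat) : R := c j * sk (S (sg j)).
Definition sU (sg : nat -> nat) (j : nat) : nat := S (sg j).

Lemma FD_eq c sg M t : FD c sg M t = t * FS c sg M t - FS (cU c sg) (sU sg) M t.
Proof.
  unfold FD, FS, cU, sU. induction M as [|M IH]; simpl. ring.
  rewrite IH. ring.
Qed.

Lemma FS_der c sg M t : is_derive (FS c sg M) t (FD c sg M t).
Proof.
  induction M as [|M IH].
  - unfold FS, FD. simpl. apply is_derive_scal. apply h_der.
  - eapply D_ext. 3: apply D_plus; [apply IH | apply is_derive_scal; apply h_der].
    intro; reflexivity. reflexivity.
Qed.

Lemma Dble_FD c sg M : Dble (FD c sg M).
Proof. apply Dble_ext with (fun t => t * FS c sg M t - FS (cU c sg) (sU sg) M t).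
  intro; rewrite FD_eq; auto.
  apply Dble_minus. apply Dble_mult. apply Dble_id. apply Dble_FS. apply Dble_FS. Qed.

Lemma FS_t c sg M t : sum_f_R0 (fun j => c j * (t * h (sg j) t)) M = t * FS c sg M t.
Proof. unfold FS. induction M as [|M IH]; simpl. ring. rewrite IH. ring. Qed.

Lemma KL c0 c sg M a b : 0 <= c0 -> (forall a b, a <= b -> GG 0 0 a b <= c0) ->
  (forall j k, (j <= M)%nat -> (k <= M)%nat -> sg j = sg k -> j = k) -> a <= b ->
  RInt (fun t => FS c sg M t * FS c sg M t + t ^ 2 * (FS c sg M t * FS c sg M t) + FD c sg M t * FD c sg M t) a b
  <= c0 * sum_f_R0 (fun j => cU c sg j * cU c sg j) M.
Proof.
  intros Hc0 HG Hinj Hab.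
  set (f := FS c sg M). set (fd := FD c sg M). set (U := FS (cU c sg) (sU sg) M).
  set (g := fun t => f t * f t + t ^ 2 * (f t * f t) + fd t * fd t).
  set (W := fun t => t * (f t * f t)).
  assert (Df : Dble f) by apply Dble_FS.
  assert (Dfd : Dble fd) by apply Dble_FD.
  assert (DU : Dble U) by apply Dble_FS.
  assert (Dg : Dble g).
  { unfold g. apply Dble_plus. apply Dble_plus. apply Dble_mult; auto. apply Dble_mult.
    apply Dble_ext with (fun t => t * t). intro; ring. apply Dble_mult; apply Dble_id.
    apply Dble_mult; auto. apply Dble_mult; auto. }
  assert (DW : dec W).
  { unfold W. apply dec_ext with (fun t => (t * f t) * f t). intro; ring.
    apply dec_mult; [|apply bnd_FS].
    apply dec_ext with (fun t => sum_f_R0 (fun j => c j * (t * h (sg j) t)) M).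
    intro t. unfold f. apply FS_t.
    apply (dec_sum (fun j t => c j * (t * h (sg j) t))). intro j. apply dec_scal, dec_th. }
  assert (Hinj' : forall j k, (j <= M)%nat -> (k <= M)%nat -> sU sg j = sU sg k -> j = k).
  { intros j k Hj Hk E. unfold sU in E. injection E. apply Hinj; auto. }
  destruct (nat_unbounded (Rabs a + Rabs b)) as [m0 Hm0].
  eapply (le_lim _ _ _ m0); [| exact (bdry_lim W 1 DW)].
  intros m Hm. apply le_INR in Hm.
  pose proof (Rabs_pos a). pose proof (Rabs_pos b). pose proof (RRle_abs a). pose proof (RRle_abs b).
  pose proof (Rabs_Ropp a). pose proof (RRle_abs (-a)). pose proof (Rabs_Ropp b). pose proof (RRle_abs (-b)).
  change (RInt g a b <= c0 * sum_f_R0 (fun j => cU c sg j * cU c sg j) M + (W (INR m) - W (- INR m)) * 1).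
  eapply Rle_trans. apply (RInt_mono_int _ a b (- INR m) (INR m)); try lra. auto.
  intro t. unfold g. pose proof (Rle_0_sqr (f t)). pose proof (Rle_0_sqr (fd t)). pose proof (pow2_ge_0 t).
  unfold Rsqr in *. nra.
  set (D := fun t => f t * f t + 2 * t * f t * fd t).
  assert (DD : Dble D).
  { unfold D. apply Dble_plus. apply Dble_mult; auto. apply Dble_mult; auto. apply Dble_mult; auto.
    apply Dble_scal, Dble_id. }
  rewrite (RI_ext g (fun t => U t * U t + D t)).
  2:{ intro t. unfold g, D. unfold fd. rewrite FD_eq. fold f U. ring. }
  rewrite RI_plus by (auto; apply Dble_mult; auto).
  rewrite (RInt_der W D).
  2:{ intro x. unfold W, D. eapply D_ext. 3: apply D_mult; [apply D_id | apply D_mult; apply FS_der].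
      intro; reflexivity. cbv beta. unfold f, fd. ring. }
  2: auto.
  pose proof (PB c0 (cU c sg) (sU sg) M (- INR m) (INR m) Hc0 HG Hinj' ltac:(lra)).
  fold U in H7. lra.
Qed.

Lemma h_sup c0 k y : 0 <= c0 -> (forall a b, a <= b -> GG 0 0 a b <= c0) ->
  h k y * h k y <= 2 * c0 * sk (S k).
Proof.
  intros Hc0 HG.
  set (c := fun _ : nat => 1). set (sg := fun _ : nat => k).
  set (f := FS c sg 0). set (fd := FD c sg 0).
  set (s := sk (S k)). pose proof (sk_pos k) as Hs. fold s in Hs.
  assert (Hinj : forall j k0, (j <= 0)%nat -> (k0 <= 0)%nat -> sg j = sg k0 -> j = k0) by (intros; lia).
  assert (Hf : forall t, f t = h k t) by (intro; unfold f, FS, c, sg; simpl; ring).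
  set (g := fun t => f t * f t + t ^ 2 * (f t * f t) + fd t * fd t).
  assert (Df : Dble f) by apply Dble_FS.
  assert (Dfd : Dble fd) by apply Dble_FD.
  assert (Dg : Dble g).
  { unfold g. apply Dble_plus. apply Dble_plus. apply Dble_mult; auto. apply Dble_mult.
    apply Dble_ext with (fun t => t * t). intro; ring. apply Dble_mult; apply Dble_id.
    apply Dble_mult; auto. apply Dble_mult; auto. }
  assert (Dff : Dble (fun t => f t * f t)) by (apply Dble_mult; auto).
  assert (Key : forall a, a <= y -> f y * f y <= f a * f a + 2 * c0 * s).
  { intros a Ha.
    assert (E : RInt (fun t => 2 * (f t * fd t)) a y = f y * f y - f a * f a).
    { apply (RInt_der (fun t => f t * f t)).
      - intro x. eapply D_ext. 3: apply D_mult; apply FS_der. intro; reflexivity. fold f fd. ring.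
      - apply Dble_scal, Dble_mult; auto. }
    pose proof (KL c0 c sg 0 a y Hc0 HG Hinj Ha) as K. fold f fd g in K.
    simpl sum_f_R0 in K. unfold cU, c, sg in K. fold s in K.
    pose proof (PB c0 c sg 0 a y Hc0 HG Hinj Ha) as P. fold f in P. simpl sum_f_R0 in P. unfold c in P.
    assert (I : RInt (fun t => 2 * (f t * fd t)) a y <= RInt (fun t => s * (f t * f t) + / s * g t) a y).
    { apply RInt_le; auto. apply Dble_RInt, Dble_scal, Dble_mult; auto.
      apply Dble_RInt, Dble_plus; apply Dble_scal; auto.
      intros t _. unfold g. pose proof (pow2_ge_0 t). pose proof (Rle_0_sqr (f t)). unfold Rsqr in *.
      assert (0 <= (s * f t - fd t) ^ 2 * / s) by (apply Rmult_le_pos; [apply pow2_ge_0 | left; apply Rinv_0_lt_compat; lra]).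
      assert (0 <= t^2 * (f t * f t) * / s) by (apply Rmult_le_pos; [nra | left; apply Rinv_0_lt_compat; lra]).
      assert (Ex : s * (f t * f t) + / s * (f t * f t + t ^ 2 * (f t * f t) + fd t * fd t) - 2 * (f t * fd t)
                = (s * f t - fd t) ^ 2 * / s + t^2 * (f t * f t) * / s + (f t * f t) * / s) by (field; lra).
      assert (0 <= (f t * f t) * / s) by (apply Rmult_le_pos; [nra | left; apply Rinv_0_lt_compat; lra]).
      lra. }
    rewrite RI_plus in I by (apply Dble_scal; auto).
    rewrite (RI_scal s (fun t => f t * f t) a y Dff), (RI_scal (/ s) g a y Dg) in I.
    assert (s * RInt (fun t => f t * f t) a y <= s * (c0 * (1 * 1))) by (apply Rmult_le_compat_l; lra).
    assert (/ s * RInt g a y <= / s * (c0 * (1 * s * (1 * s)))).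
    { apply Rmult_le_compat_l. left; apply Rinv_0_lt_compat; lra. exact K. }
    replace (/ s * (c0 * (1 * s * (1 * s)))) with (c0 * s) in H0 by (field; lra).
    lra. }
  rewrite <- Hf.
  destruct (nat_unbounded (Rabs y)) as [m0 Hm0].
  assert (DW : dec (fun t => f t * f t)).
  { apply dec_mult. apply dec_FS. apply bnd_FS. }
  eapply (le_lim _ _ _ m0); [| exact (dec_limm _ DW)].
  intros m Hm. apply le_INR in Hm. pose proof (Rabs_Ropp y). pose proof (RRle_abs (-y)).
  pose proof (Key (- INR m) ltac:(lra)). lra.
Qed.


Lemma atan_le u : 0 <= u -> atan u <= u.
Proof.
  intro Hu.
  assert (E : RInt (fun t => / (1 + t ^ 2)) 0 u = atan u - atan 0).
  { apply (RInt_der atan).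
    - intro x. eapply D_ext. 3: apply is_derive_atan. intro; reflexivity. unfold Rsqr. f_equal. ring.
    - apply Dble_inv1. }
  rewrite atan_0 in E.
  assert (RInt (fun t => / (1 + t ^ 2)) 0 u <= RInt (fun _ => 1) 0 u).
  { apply RInt_le; auto. apply Dble_RInt, Dble_inv1. apply Dble_RInt, Dble_const.
    intros x _. pose proof (pow2_ge_0 x). rewrite <- Rinv_1. apply Rinv_le_contravar; lra. }
  rewrite (RInt_const (V:=R_CompleteNormedModule)) in H. change (RInt (fun t => / (1 + t ^ 2)) 0 u <= (u - 0) * 1) in H.
  lra.
Qed.

Lemma tail_bound g C a1 a2 M : Dble g -> (forall t, Rabs (g t) * (1 + t ^ 2) <= C) -> 0 < M ->
  a1 <= a2 -> a2 <= - M -> Rabs (RInt g a1 a2) <= C / M.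
Proof.
  intros Dg HC HM H12 H2.
  assert (HC0 : 0 <= C) by (pose proof (HC 0); pose proof (Rabs_pos (g 0)); pose proof (one_t2 0); nra).
  assert (Hb : forall t, - (C * / (1 + t ^ 2)) <= g t <= C * / (1 + t ^ 2)).
  { intro t. pose proof (one_t2 t). specialize (HC t).
    assert (Rabs (g t) <= C * / (1 + t ^ 2)).
    { apply Rmult_le_reg_r with (1 + t^2). lra. rewrite Rmult_assoc, Rinv_l by lra. lra. }
    unfold Rabs in *. destruct (Rcase_abs (g t)); lra. }
  assert (E : RInt (fun t => C * / (1 + t ^ 2)) a1 a2 = C * (atan a2 - atan a1)).
  { rewrite RI_scal by apply Dble_inv1. f_equal. apply (RInt_der atan).
    - intro x. eapply D_ext. 3: apply is_derive_atan. intro; reflexivity. unfold Rsqr. f_equal. ring.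
    - apply Dble_inv1. }
  assert (I1 : RInt g a1 a2 <= RInt (fun t => C * / (1 + t ^ 2)) a1 a2).
  { apply RInt_le; auto. apply Dble_RInt; auto. apply Dble_RInt, Dble_scal, Dble_inv1.
    intros; apply Hb. }
  assert (I2 : RInt (fun t => - (C * / (1 + t ^ 2))) a1 a2 <= RInt g a1 a2).
  { apply RInt_le; auto. apply Dble_RInt. apply Dble_ext with (fun t => (- C) * / (1 + t^2)).
    intro; ring. apply Dble_scal, Dble_inv1. apply Dble_RInt; auto.
    intros; apply Hb. }
  rewrite (RI_ext _ (fun t => (- C) * / (1 + t ^ 2))) in I2 by (intro; ring).
  rewrite RI_scal in I2 by apply Dble_inv1.
  rewrite E in I1.
  assert (Ea : RInt (fun t => / (1 + t ^ 2)) a1 a2 = atan a2 - atan a1).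
  { apply (RInt_der atan).
    - intro x. eapply D_ext. 3: apply is_derive_atan. intro; reflexivity. unfold Rsqr. f_equal. ring.
    - apply Dble_inv1. }
  rewrite Ea in I2.
  (* atan a2 - atan a1 <= atan (1/M) <= 1/M *)
  assert (Hat : atan a2 - atan a1 <= / M).
  { pose proof (atan_bound a1).
    assert (atan a2 <= atan (- M)).
    { destruct (Req_dec a2 (-M)). subst; lra. left; apply atan_increasing; lra. }
    rewrite atan_opp in H0. pose proof (atan_inv M HM). pose proof (atan_le (/ M) ltac:(left; apply Rinv_0_lt_compat; lra)).
    unfold Rdiv in *. lra. }
  assert (0 <= atan a2 - atan a1).
  { destruct (Req_dec a1 a2). subst; lra. left. pose proof (atan_increasing a1 a2). lra. }
  unfold Rdiv. apply Rabs_le. split; nra.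
Qed.

Lemma RI_swap g a b : Dble g -> RInt g a b = - RInt g b a.
Proof. intro D. rewrite <- (opp_RInt_swap (V:=R_CompleteNormedModule)) by (apply Dble_RInt; auto).
  reflexivity. Qed.

Lemma RI_chasles g a b c : Dble g -> RInt g a b + RInt g b c = RInt g a c.
Proof. intro D. apply (RInt_Chasles (V:=R_CompleteNormedModule)); apply Dble_RInt; auto. Qed.

Lemma gen_exists g x : Dble g -> dec g -> exists L : R, is_RInt_gen g (Rbar_locally m_infty) (at_point x) L.
Proof.
  intros Dg [C HC].
  assert (HC0 : 0 <= C) by (pose proof (HC 0); pose proof (Rabs_pos (g 0)); pose proof (one_t2 0); nra).
  assert (H1 : filter_prod (Rbar_locally m_infty) (at_point x)
     (fun ab => (exists y : R_CompleteSpace, is_RInt g (fst ab) (snd ab) y) /\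
        (forall y1 y2 : R_CompleteSpace, is_RInt g (fst ab) (snd ab) y1 -> is_RInt g (fst ab) (snd ab) y2 -> y1 = y2))).
  { apply filter_forall. intros [a b]. split.
    + exists (RInt g a b). apply (RInt_correct (V:=R_CompleteNormedModule)). apply Dble_RInt; auto.
    + intros y1 y2 H1 H2. simpl in *. apply (is_RInt_unique (V:=R_CompleteNormedModule)) in H1. apply (is_RInt_unique (V:=R_CompleteNormedModule)) in H2. congruence. }
  destruct (proj1 (filterlimi_locally_cauchy (U:=R_CompleteSpace) (F:=filter_prod (Rbar_locally m_infty) (at_point x))
     (fun ab y => is_RInt g (fst ab) (snd ab) y) H1)) as [L HL].
  - intro eps. pose proof (cond_pos eps) as He.
    set (M := (C + 1) / eps + 1).
    assert (HM : 0 < M) by (unfold M; assert (0 <= (C+1)/eps) by (apply Rle_mult_inv_pos; lra); lra).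
    exists (fun ab => fst ab < - M /\ snd ab = x). split.
    + apply (Filter_prod _ _ _ (fun a => a < - M) (fun b => b = x)).
      exists (- M). auto. reflexivity. intros; simpl; auto.
    + intros [u1 u2] [v1 v2] [Hu1 Hu2] [Hv1 Hv2] u' v' Hu Hv. simpl in *. subst.
      apply (is_RInt_unique (V:=R_CompleteNormedModule)) in Hu. apply (is_RInt_unique (V:=R_CompleteNormedModule)) in Hv. subst.
      change (Rabs (RInt g v1 x - RInt g u1 x) < eps).
      rewrite <- (RI_chasles g v1 u1 x Dg).
      unfold Rminus. rewrite Rplus_assoc, Rplus_opp_r, Rplus_0_r.
      assert (Hlt : C / M < eps).
      { assert (EM : eps * M = C + 1 + eps) by (unfold M; field; lra).
        unfold Rdiv. apply Rmult_lt_reg_r with M; auto. rewrite Rmult_assoc, Rinv_l by lra. lra. }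
      destruct (Rle_dec v1 u1).
      * pose proof (tail_bound g C v1 u1 M Dg HC HM r ltac:(lra)). lra.
      * rewrite RI_swap by auto. rewrite Rabs_Ropp.
        pose proof (tail_bound g C u1 v1 M Dg HC HM ltac:(lra) ltac:(lra)). lra.
  - exists L. exact HL.
Qed.

Lemma gen_seq g x L : Dble g -> is_RInt_gen g (Rbar_locally m_infty) (at_point x) L ->
  is_lim_seq (fun m => RInt g (- INR m) x) L.
Proof.
  intros Dg HL. apply is_lim_seq_spec. intro eps.
  destruct (HL (ball L eps) (locally_ball L eps)) as [Q R0 HQ HR Himp].
  destruct HQ as [M HM].
  destruct (nat_unbounded (- M + 1)) as [N0 HN0].
  exists N0. intros m Hm. apply le_INR in Hm.
  destruct (Himp (- INR m) x) as [y [Hy1 Hy2]]. apply HM. lra. exact HR.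
  simpl in Hy1. apply (is_RInt_unique (V:=R_CompleteNormedModule)) in Hy1. subst y.
  exact Hy2.
Qed.

Lemma amgm p u : 0 < p -> 2 * u <= p * (u * u) + / p.
Proof.
  intro Hp. apply Rmult_le_reg_l with p; auto.
  replace (p * (p * (u * u) + / p)) with ((p * u) * (p * u) + 1) by (field; lra).
  pose proof (Rle_0_sqr (p * u - 1)). unfold Rsqr in H. nra.
Qed.

Lemma fin_bound c0 c M a x eps : 0 <= c0 -> (forall a b, a <= b -> GG 0 0 a b <= c0) ->
  a <= x -> 0 < eps ->
  Rabs (RInt (FS c (fun k => k) M) a x) <=
    (eps * (c0 * sum_f_R0 (fun j => cU c (fun k => k) j * cU c (fun k => k) j) M) + PI / eps) / 2.
Proof.
  intros Hc0 HG Hax He.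
  set (sg := fun k : nat => k).
  set (f := FS c sg M). set (fd := FD c sg M).
  set (g := fun t => f t * f t + t ^ 2 * (f t * f t) + fd t * fd t).
  assert (Hinj : forall j k, (j <= M)%nat -> (k <= M)%nat -> sg j = sg k -> j = k) by (unfold sg; auto).
  pose proof (KL c0 c sg M a x Hc0 HG Hinj Hax) as K. fold f fd g in K.
  set (Q := c0 * sum_f_R0 (fun j => cU c sg j * cU c sg j) M) in *.
  assert (Df : Dble f) by apply Dble_FS.
  assert (Dfd : Dble fd) by apply Dble_FD.
  assert (Dg : Dble g).
  { unfold g. apply Dble_plus. apply Dble_plus. apply Dble_mult; auto. apply Dble_mult.
    apply Dble_ext with (fun t => t * t). intro; ring. apply Dble_mult; apply Dble_id.
    apply Dble_mult; auto. apply Dble_mult; auto. }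
  set (b := fun t => (eps * g t + / eps * / (1 + t ^ 2)) / 2).
  assert (Db : Dble b).
  { unfold b. apply Dble_ext with (fun t => / 2 * (eps * g t + / eps * / (1 + t ^ 2))). intro; unfold Rdiv; ring.
    apply Dble_scal, Dble_plus; apply Dble_scal; auto. apply Dble_inv1. }
  assert (Hb : forall t, - b t <= f t <= b t).
  { intro t. unfold b, g. pose proof (one_t2 t) as Hw.
    set (w := 1 + t ^ 2) in *.
    assert (Hp : 0 < eps * w) by (apply Rmult_lt_0_compat; lra).
    pose proof (amgm (eps * w) (f t) Hp) as A1.
    pose proof (amgm (eps * w) (- f t) Hp) as A2.
    rewrite Rinv_mult in A1, A2.
    assert (Hfd : 0 <= fd t * fd t) by apply Rle_0_sqr.
    assert (E : f t * f t + t ^ 2 * (f t * f t) = w * (f t * f t)) by (unfold w; ring).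
    rewrite E. split; nra. }
  assert (I1 : RInt f a x <= RInt b a x).
  { apply RInt_le; auto; try (apply Dble_RInt; auto). intros; apply Hb. }
  assert (I2 : RInt (fun t => - b t) a x <= RInt f a x).
  { apply RInt_le; auto; try (apply Dble_RInt; auto).
    apply Dble_ext with (fun t => (-1) * b t). intro; ring. apply Dble_scal; auto.
    intros; apply Hb. }
  assert (Eb : @eq R (RInt b a x) ((eps * RInt g a x + / eps * RInt (fun t => / (1 + t ^ 2)) a x) / 2)).
  { rewrite (RI_ext b (fun t => / 2 * (eps * g t + / eps * / (1 + t ^ 2)))) by (intro; unfold b, Rdiv; ring).
    rewrite (RI_scal (/ 2) _ a x (Dble_plus _ _ (Dble_scal _ _ Dg) (Dble_scal _ _ Dble_inv1))).
    rewrite (RI_plus _ _ a x (Dble_scal _ _ Dg) (Dble_scal _ _ Dble_inv1)).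
    rewrite (RI_scal eps g a x Dg), (RI_scal (/ eps) _ a x Dble_inv1). unfold Rdiv; ring. }
  rewrite (RI_ext _ (fun t => (-1) * b t)) in I2 by (intro; ring).
  rewrite RI_scal in I2 by auto.
  pose proof (atan_int a x Hax) as At.
  assert (eps * RInt g a x <= eps * Q) by (apply Rmult_le_compat_l; lra).
  assert (/ eps * RInt (fun t => / (1 + t ^ 2)) a x <= / eps * PI)
    by (apply Rmult_le_compat_l; [left; apply Rinv_0_lt_compat; lra | auto]).
  unfold Rdiv at 1. fold f. unfold Rdiv.
  apply Rabs_le. rewrite Eb in I1, I2. split; lra.
Qed.


Lemma RInt_FS c sg M a b : RInt (FS c sg M) a b = sum_f_R0 (fun j => c j * RInt (h (sg j)) a b) M.
Proof.
  induction M as [|M IH].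
  - simpl. rewrite <- RI_scal by apply Dble_h. apply RI_ext. intro; reflexivity.
  - simpl. rewrite <- IH. rewrite <- RI_scal by apply Dble_h.
    rewrite <- RI_plus. apply RI_ext. intro; reflexivity.
    apply Dble_FS. apply Dble_scal, Dble_h.
Qed.

Lemma hint_lim k x : is_lim_seq (fun m => RInt (h k) (- INR m) x) (hermite_int k x).
Proof.
  destruct (gen_exists (h k) x (Dble_h k) (dec_h k)) as [L HL].
  assert (E : hermite_int k x = L).
  { unfold hermite_int. apply (is_RInt_gen_unique (V:=R_CompleteNormedModule)). exact HL. }
  rewrite E. apply gen_seq; auto. apply Dble_h.
Qed.

Lemma sum_lim c N x : is_lim_seq (fun m => sum_f_R0 (fun k => c k * RInt (h k) (- INR m) x) N)
                                 (sum_f_R0 (fun k => c k * hermite_int k x) N).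
Proof.
  induction N as [|N IH].
  - simpl. pose proof (is_lim_seq_scal_l _ (c 0%nat) _ (hint_lim 0 x)) as H. exact H.
  - simpl. apply is_lim_seq_plus'. exact IH.
    pose proof (is_lim_seq_scal_l _ (c (S N)) _ (hint_lim (S N) x)) as H. exact H.
Qed.

Lemma sum_abs_bound (u : nat -> R) B m : (forall i, Rabs (u i) <= B) -> Rabs (sum_f_R0 u m) <= INR (S m) * B.
Proof.
  intro H. induction m as [|m IH].
  - simpl. rewrite Rmult_1_l. apply H.
  - simpl sum_f_R0. eapply Rle_trans. apply Rabs_triang. rewrite S_INR. specialize (H (S m)). lra.
Qed.

Lemma a_bound c0 n xs k : 0 <= c0 -> (forall a b, a <= b -> GG 0 0 a b <= c0) -> (0 < n)%nat ->
  a_hat n xs k * a_hat n xs k <= 2 * c0 * sk (S k).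
Proof.
  intros Hc0 HG Hn.
  set (V := 2 * c0 * sk (S k)).
  assert (HV : 0 <= V) by (unfold V; pose proof (sk_pos k); nra).
  set (B := sqrt V). assert (HB : B * B = V) by (apply sqrt_sqrt; auto).
  assert (HB0 : 0 <= B) by apply sqrt_pos.
  assert (Hh : forall y, Rabs (h k y) <= B).
  { intro y. pose proof (h_sup c0 k y Hc0 HG) as Hs. fold V in Hs.
    assert (Rabs (h k y) * Rabs (h k y) = h k y * h k y).
    { rewrite <- Rabs_mult. apply Rabs_right. apply Rle_ge, Rle_0_sqr. }
    pose proof (Rabs_pos (h k y)). nra. }
  assert (Hs : Rabs (sum_f_R0 (fun i => h k (xs i)) (pred n)) <= INR n * B).
  { replace (INR n) with (INR (S (pred n))) by (f_equal; lia). apply sum_abs_bound. intro; apply Hh. }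
  assert (Hn' : 0 < INR n) by (apply lt_0_INR; lia).
  assert (Ha : Rabs (a_hat n xs k) <= B).
  { unfold a_hat. rewrite Rabs_mult, Rabs_right by (left; apply Rinv_0_lt_compat; auto).
    apply Rmult_le_reg_l with (INR n); auto. rewrite <- Rmult_assoc, Rinv_r by lra. lra. }
  assert (Rabs (a_hat n xs k) * Rabs (a_hat n xs k) = a_hat n xs k * a_hat n xs k).
  { rewrite <- Rabs_mult. apply Rabs_right. apply Rle_ge, Rle_0_sqr. }
  pose proof (Rabs_pos (a_hat n xs k)). nra.
Qed.

Theorem lemma1 :
  exists C : R,
    forall (n : nat) (xs : nat -> R), (0 < n)%nat ->
    forall (N : nat), (1 <= N)%nat ->
    forall x : R, Rabs (F_hat n xs N x) <= C * Rpower (INR N) (17 / 12).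
Proof.
  destruct c0_exists as [c0 [Hc0 HG]].
  exists ((32 * (c0 * c0) + PI) / 2).
  intros n xs Hn N HN x.
  set (c := a_hat n xs).
  assert (EF : F_hat n xs N x = sum_f_R0 (fun k => c k * hermite_int k x) N) by reflexivity.
  assert (HN1 : 1 <= INR N) by (replace 1 with (INR 1) by reflexivity; apply le_INR; lia).
  set (r := sqrt (sqrt (INR N))).
  assert (Hr2 : r * r = sqrt (INR N)) by (apply sqrt_sqrt, sqrt_pos).
  assert (Hs2 : sqrt (INR N) * sqrt (INR N) = INR N) by (apply sqrt_sqrt; lra).
  assert (Hr4 : r * r * (r * r) = INR N) by (rewrite Hr2; auto).
  assert (Hr1 : 1 <= r).
  { assert (1 <= sqrt (INR N)) by (rewrite <- sqrt_1; apply sqrt_le_1_alt; lra).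
    unfold r. rewrite <- sqrt_1. apply sqrt_le_1_alt. lra. }
  set (R5 := r ^ 5).
  assert (HR5 : 1 <= R5) by (unfold R5; pose proof (pow_R1_Rle r 5 Hr1); lra).
  set (eps := / R5).
  assert (He : 0 < eps) by (apply Rinv_0_lt_compat; lra).
  set (Qc := c0 * sum_f_R0 (fun j => cU c (fun k => k) j * cU c (fun k => k) j) N).
  assert (HQ : Qc <= 32 * (c0 * c0) * (R5 * R5)).
  { unfold Qc.
    assert (Hsum : sum_f_R0 (fun j => cU c (fun k => k) j * cU c (fun k => k) j) N
                   <= sum_f_R0 (fun _ => 16 * c0 * (r * r * (r * r * (r * r)))) N).
    { apply sum_Rle. intros k Hk. unfold cU.
      pose proof (a_bound c0 n xs k Hc0 HG Hn) as Ha. fold c in Ha.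
      pose proof (sk_pos k) as Hsk. pose proof (sk_sq (S k)) as Hsq.
      assert (Hsk2 : sk (S k) <= 2 * (r * r)).
      { assert (INR (S k) <= INR N + 1) by (rewrite S_INR; apply Rplus_le_compat_r, le_INR; auto).
        assert (sk (S k) * sk (S k) <= (2 * (r * r)) * (2 * (r * r))) by nra.
        pose proof (Rle_0_sqr r). unfold Rsqr in *. nra. }
      assert (c k * sk (S k) * (c k * sk (S k)) = (c k * c k) * (sk (S k) * sk (S k))) by ring.
      assert ((c k * c k) * (sk (S k) * sk (S k)) <= (2 * c0 * sk (S k)) * (sk (S k) * sk (S k))).
      { apply Rmult_le_compat_r. nra. auto. }
      assert (sk (S k) * (sk (S k) * sk (S k)) <= (2 * (r * r)) * ((2 * (r * r)) * (2 * (r * r)))).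
      { pose proof (Rle_0_sqr r). unfold Rsqr in *.
        apply Rmult_le_compat; try nra. }
      assert (2 * c0 * sk (S k) * (sk (S k) * sk (S k)) <= 2 * c0 * ((2 * (r * r)) * ((2 * (r * r)) * (2 * (r * r))))).
      { replace (2 * c0 * sk (S k) * (sk (S k) * sk (S k))) with (2 * c0 * (sk (S k) * (sk (S k) * sk (S k)))) by ring.
        apply Rmult_le_compat_l; lra. }
      nra. }
    rewrite sum_cte in Hsum.
    assert (HSN : INR (S N) <= 2 * (r * r * (r * r))) by (rewrite S_INR; lra).
    assert (0 <= 16 * c0 * (r * r * (r * r * (r * r)))).
    { pose proof (Rle_0_sqr r). unfold Rsqr in *. apply Rmult_le_pos. lra. nra. }
    assert (sum_f_R0 (fun j => cU c (fun k => k) j * cU c (fun k => k) j) N <= 32 * c0 * (R5 * R5)).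
    { eapply Rle_trans. exact Hsum.
      eapply Rle_trans. apply Rmult_le_compat_l. auto. exact HSN.
      unfold R5. simpl. lra. }
    replace (32 * (c0 * c0) * (R5 * R5)) with (c0 * (32 * c0 * (R5 * R5))) by ring.
    apply Rmult_le_compat_l; auto. }
  set (Bd := (32 * (c0 * c0) + PI) / 2 * R5).
  assert (Hbd : (eps * Qc + PI / eps) / 2 <= Bd).
  { unfold Bd, eps. unfold Rdiv. rewrite Rinv_inv.
    assert (/ R5 * Qc <= / R5 * (32 * (c0 * c0) * (R5 * R5))).
    { apply Rmult_le_compat_l. left; apply Rinv_0_lt_compat; lra. auto. }
    replace (/ R5 * (32 * (c0 * c0) * (R5 * R5))) with (32 * (c0 * c0) * R5) in H by (field; lra).
    lra. }
  assert (Hlim : is_lim_seq (fun m => RInt (FS c (fun k => k) N) (- INR m) x) (F_hat n xs N x)).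
  { rewrite EF. eapply is_lim_seq_ext; [|apply (sum_lim c N x)].
    intro m. rewrite RInt_FS. reflexivity. }
  assert (Hle : Rabs (F_hat n xs N x) <= Bd).
  { apply is_lim_seq_abs in Hlim. simpl in Hlim.
    destruct (nat_unbounded (- x)) as [m0 Hm0].
    assert (Hc : Rbar_le (Rabs (F_hat n xs N x)) Bd).
    { apply (is_lim_seq_le_loc (fun m => Rabs (RInt (FS c (fun k => k) N) (- INR m) x)) (fun _ => Bd)); auto.
      2: apply is_lim_seq_const.
      exists m0. intros m Hm. apply le_INR in Hm.
      eapply Rle_trans. apply (fin_bound c0 c N (- INR m) x eps Hc0 HG); auto. lra.
      fold Qc. auto. }
    exact Hc. }
  eapply Rle_trans. exact Hle.
  unfold Bd. apply Rmult_le_compat_l.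
  { pose proof PI_RGT_0. pose proof (Rle_0_sqr c0). unfold Rsqr in *. lra. }
  assert (HNp : 0 < INR N) by lra.
  assert (ER : R5 = Rpower (INR N) (5 / 4)).
  { assert (Hsq : 0 < sqrt (INR N)) by (apply sqrt_lt_R0; auto).
    assert (Hr : r = Rpower (INR N) (/ 2 * / 2)).
    { unfold r. rewrite <- Rpower_mult. rewrite (Rpower_sqrt (INR N)) by auto. rewrite (Rpower_sqrt (sqrt (INR N))) by auto. reflexivity. }
    assert (Hr0 : 0 < r) by lra.
    unfold R5. rewrite <- (Rpower_pow 5 r Hr0). rewrite Hr, Rpower_mult. f_equal. simpl. field. }
  rewrite ER. apply Rle_Rpower; lra.
Qed.
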